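(* Let $q$ be a prime power, $\mathbb{L}=\mathrm{GF}(q^m)$, and $\ell\mid m$. Let $$\mathcal{C}_\ell=\{(b,b^q,\ldots,b^{q^{\ell-1}}) : b\in\mathrm{GF}(q^\ell)\}\subseteq\mathbb{L}^\ell.$$ In the symbol Hamming metric on $\mathbb{L}^\ell$, the covering radius of $\mathcal{C}_\ell$ is $\ell$ if $\ell<m$ and $\ell-1$ if $\ell=m$.
   Context: The symbol Hamming distance between $x,y\in\mathbb{L}^\ell$ is $|\{i : x_i\ne y_i\}|$. The covering radius of a code $\mathcal{C}\subseteq\mathbb{L}^\ell$ is $\max_{x\in\mathbb{L}^\ell}\min_{c\in\mathcal{C}}d(x,c)$. $\mathrm{GF}(q^\ell)$ is the unique subfield of $\mathbb{L}$ of size $q^\ell$. *)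

(* Defs.v *)
From HB Require Import structures.
From mathcomp Require Import all_boot all_order all_algebra all_field.
Set Implicit Arguments. Unset Strict Implicit. Unset Printing Implicit Defensive.
Import GRing.Theory.

Definition prime_power (q : nat) : Prop := exists p k, prime p /\ 0 < k /\ q = p ^ k.

Definition is_subfield (L : finFieldType) (K : {set L}) : Prop :=
  (1%R \in K) /\
  (forall x y, x \in K -> y \in K -> (x - y)%R \in K) /\
  (forall x y, x \in K -> y \in K -> (x * y)%R \in K) /\
  (forall x, x \in K -> (x^-1)%R \in K).

Definition hamming (L : finFieldType) (n : nat) (x y : 'rV[L]_n) : nat :=
  #|[set i : 'I_n | x ord0 i != y ord0 i]|.

(* covering radius: max over x of min over c in C of d(x,c)
   (for empty C the inner min defaults to n; irrelevant here) *)
Definition covering_radius (L : finFieldType) (n : nat) (C : {set 'rV[L]_n}) : nat :=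
  \max_(x : 'rV[L]_n) \big[minn/n]_(c in C) hamming x c.

Definition frob_code (L : finFieldType) (q ell : nat) (K : {set L}) : {set 'rV[L]_ell} :=
  [set ((\row_(i < ell) (b ^+ (q ^ i)%N))%R) | b in K].

(* Main.v *)
Require Import Defs.
From mathcomp Require Import all_boot all_order all_algebra all_field.
From mathcomp Require Import zify.
Import GRing.Theory.

Lemma bigmin_le_idx (I : finType) (P : pred I) (n : nat) (F : I -> nat) :
  \big[minn/n]_(i | P i) F i <= n.
Proof. by apply: (big_rec (fun x => x <= n)) => // i x _ hx; exact: leq_trans (geq_minr _ x) hx. Qed.

Lemma bigmin_le_elt (I : finType) (P : pred I) (n : nat) (F : I -> nat) i0 :
  P i0 -> \big[minn/n]_(i | P i) F i <= F i0.
Proof.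
move=> Pi; rewrite -big_filter.
have : i0 \in [seq i <- index_enum I | P i] by rewrite mem_filter Pi mem_index_enum.
elim: [seq i <- index_enum I | P i] => // a r IH; rewrite in_cons big_cons.
case/orP => [/eqP <-|/IH h]; first exact: geq_minl.
exact: leq_trans (geq_minr _ _) h.
Qed.

Lemma bigmin_ge (I : finType) (P : pred I) (n r : nat) (F : I -> nat) :
  r <= n -> (forall i, P i -> r <= F i) -> r <= \big[minn/n]_(i | P i) F i.
Proof.
move=> rn H; apply: (big_ind (fun x => r <= x)) => //.
by move=> x y; rewrite leq_min => -> ->.
Qed.

Theorem theorem10p2 (L : finFieldType) (q m ell : nat) (K : {set L}) :
  prime_power q ->
  #|L| = q ^ m ->
  ell %| m ->
  is_subfield K -> #|K| = q ^ ell ->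
  covering_radius (frob_code q ell K) = (if ell < m then ell else ell.-1).
Proof.
move=> [p [k [pp [k0 ->]]]] cardL dvd [K1 [_ [KM _]]] cardK.
have q2 : 1 < p ^ k.
  by rewrite -(expn1 p) -expnM mul1n (leq_trans _ (leq_pexp2l _ k0)) ?prime_gt1 ?prime_gt0 // expn1 prime_gt1.
have m0 : 0 < m.
  case: m cardL dvd => // + _; move=> cL.
  by have := card_finNzRing_gt1 L; rewrite cL expn0.
have lem : ell <= m by apply: dvdn_leq.
case: ell lem dvd cardK => [|n] lem dvd cardK.
  by rewrite dvd0n in dvd; move/eqP: dvd => d; rewrite d in m0.
set Q := p ^ k in q2 cardL cardK *.
have Kpow : forall b j, b \in K -> (b ^+ j)%R \in K.
  move=> b j bK; elim: j => [|j IH]; first by rewrite expr0.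
  by rewrite exprS KM.
have hle : forall (x y : 'rV[L]_n.+1), hamming x y <= n.+1.
  by move=> x y; rewrite /hamming; apply: leq_trans (max_card _) _; rewrite card_ord.
have memC : forall b, b \in K -> (\row_(i < n.+1) (b ^+ (Q ^ i)))%R \in frob_code Q n.+1 K.
  by move=> b bK; apply/imsetP; exists b.
have memC' : forall c, c \in frob_code Q n.+1 K -> exists2 b, b \in K & c = (\row_(i < n.+1) (b ^+ (Q ^ i)))%R.
  by move=> c /imsetP.
rewrite /covering_radius.
case: ltnP => lt; last first.
-
  have em : n.+1 = m by apply/eqP; rewrite eqn_leq lem.
  have KT : forall x, x \in K.
    have KT' : K = setT.
      apply/eqP; rewrite eqEcard subsetT /= cardsT cardK cardL em.
      done.
    by move=> x; rewrite KT' inE.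
  apply/eqP; rewrite eqn_leq /=; apply/andP; split.
  + apply/bigmax_leqP => x _.
    apply: leq_trans (bigmin_le_elt _ _ _ _ _ (memC (x ord0 ord0) (KT _))) _.
    rewrite /hamming; apply: leq_trans (_ : _ <= #|predC1 (ord0 : 'I_n.+1)|) _; last by rewrite cardC1 card_ord.
    apply: subset_leq_card.
    apply/subsetP => i; rewrite !inE mxE; apply: contra => /eqP ->.
    by rewrite expn0 expr1.
  + have inj : forall i : 'I_n.+1, injective (fun y : L => (y ^+ (Q ^ i))%R).
      move=> i y z /(congr1 (fun t => (t ^+ (Q ^ (n.+1 - i)))%R)).
      rewrite -!exprM -expnD subnKC ?(ltnW (ltn_ord i)) // em -cardL !expf_card.
      done.
    have szL : n.+1 <= size (enum L).
      by rewrite -cardE cardL -em ltnW // ltn_expl.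
    pose x := (\row_(i < n.+1) (nth 0 (enum L) i ^+ (Q ^ i)))%R.
    apply: (leq_trans _ (leq_bigmax x)).
    apply: bigmin_ge => // c /memC' [b _ ->].
    rewrite /hamming.
    set S := [set i : 'I_n.+1 | _].
    have := cardsC [set i : 'I_n.+1 | x ord0 i != (\row_i0 b ^+ (Q ^ i0))%R ord0 i].
    rewrite card_ord => E.
    have : #|~: [set i : 'I_n.+1 | x ord0 i != (\row_i0 b ^+ (Q ^ i0))%R ord0 i]| <= 1.
      apply/card_le1_eqP => i j; rewrite !inE !mxE !negbK => /eqP /inj ei /eqP /inj ej.
      apply: ord_inj; move: (nth_uniq 0%R (leq_trans (ltn_ord i) szL) (leq_trans (ltn_ord j) szL) (enum_uniq L)).
      by rewrite ei ej eqxx => /esym/eqP.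
    move: E; move: (#|S|) (#|~: S|) => a c0 E h; lia.
-
  apply/eqP; rewrite eqn_leq; apply/andP; split.
  + by apply/bigmax_leqP => x _; apply: bigmin_le_idx.
  +     have [a aK] : exists a, a \notin K.
      apply/existsP; rewrite -negb_forall; apply/negP => /forallP H.
      have : #|L| <= #|K| by rewrite -cardsT subset_leq_card //; apply/subsetP => y _; exact: H.
      by rewrite cardK cardL leqNgt ltn_exp2l // lt.
    apply: (leq_trans _ (leq_bigmax (const_mx a))).
    apply: bigmin_ge => // c /memC' [b bK ->].
    rewrite /hamming -{1}(card_ord n.+1) -cardsT subset_leq_card //.
    apply/subsetP => i _; rewrite !inE !mxE.
    by apply: contra aK => /eqP ->; apply: Kpow.
Qed.
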